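(* Let $\alpha\ge1$ and $N\ge2$. Let $A,B$ be increasing Borel subsets of $\Omega_N$ with $\pi_{N,\alpha}(A),\pi_{N,\alpha}(B)>0$ such that $x\in A$ and $x'\in B$ imply $x\wedge x'\in B$. Then $\pi_{N,\alpha}(\cdot\mid A)$ stochastically dominates $\pi_{N,\alpha}(\cdot\mid B)$, i.e. $\pi_{N,\alpha}(f\mid A)\ge\pi_{N,\alpha}(f\mid B)$ for every increasing function $f$.
   Context: $\Omega_N=\{x\in\mathbb{R}^{N-1}:0\le x_1\le\dots\le x_{N-1}\le N\}$, $x_0=0,x_N=N$; $\pi_{N,\alpha}(dx)=\frac{\Gamma(N\alpha)}{\Gamma(\alpha)^NN^{N\alpha-1}}\prod_{i=1}^N(x_i-x_{i-1})^{\alpha-1}dx$. Increasing means w.r.t. coordinatewise order; a set is increasing if its indicator is. $(x\wedge x')_i=\min(x_i,x'_i)$. *)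

(* Defs.v *)
From HB Require Import structures.
From mathcomp Require Import all_boot all_order all_algebra.
From mathcomp Require Import all_classical all_reals all_analysis.

Import Order.TTheory GRing.Theory Num.Theory.
Import numFieldNormedType.Exports.
Local Open Scope classical_set_scope.
Local Open Scope ring_scope.

Definition Gamma (R : realType) (s : R) : R :=
  fine (\int[@lebesgue_measure R]_(t in `]0%R, +oo[) (powR t (s - 1) * expR (- t))%:E)%E.

(* For the bounded,
   boundedly supported Borel integrands used below this is the Lebesgue
   integral over R^n (Fubini). *)
Fixpoint Riter (R : realType) (n : nat) : (n.-tuple R -> R) -> R :=
  match n return (n.-tuple R -> R) -> R with
  | 0 => fun g => g [tuple]
  | n'.+1 => fun g =>
      \int[@lebesgue_measure R]_(t in [set: R]) Riter R n' (fun x => g (cons_tuple t x))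
  end.

(* Extended coordinates of x in R^(N-1): x_0 = 0, x_k (1 <= k <= N-1), x_N = N. *)
Definition xc (R : realType) (N : nat) (x : N.-1.-tuple R) (k : nat) : R :=
  if k == 0%N then 0 else if k == N then N%:R else nth 0 x k.-1.

Definition Omega (R : realType) (N : nat) : set (N.-1.-tuple R) :=
  [set x | forall k : nat, (k < N)%N -> xc R N x k <= xc R N x k.+1].

Definition dens (R : realType) (N : nat) (alpha : R) (x : N.-1.-tuple R) : R :=
  \prod_(1 <= i < N.+1) powR (xc R N x i - xc R N x i.-1) (alpha - 1).

Definition Zconst (R : realType) (N : nat) (alpha : R) : R :=
  Gamma R (N%:R * alpha) / (Gamma R alpha ^+ N * powR N%:R (N%:R * alpha - 1)).

Definition piN (R : realType) (N : nat) (alpha : R) (g : N.-1.-tuple R -> R) : R :=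
  Zconst R N alpha * Riter R N.-1 (fun x => \1_(Omega R N) x * dens R N alpha x * g x).

Definition piNset (R : realType) (N : nat) (alpha : R) (A : set (N.-1.-tuple R)) : R :=
  piN R N alpha (\1_A).

Definition condE (R : realType) (N : nat) (alpha : R)
    (f : N.-1.-tuple R -> R) (A : set (N.-1.-tuple R)) : R :=
  piN R N alpha (fun x => f x * \1_A x) / piNset R N alpha A.

Definition tle (R : realType) (n : nat) (x y : n.-tuple R) : Prop :=
  forall i : 'I_n, tnth x i <= tnth y i.

Definition tmin (R : realType) (n : nat) (x y : n.-tuple R) : n.-tuple R :=
  [tuple Num.min (tnth x i) (tnth y i) | i < n].

Definition incr_fun (R : realType) (N : nat) (f : N.-1.-tuple R -> R) : Prop :=
  forall x y, Omega R N x -> Omega R N y -> tle R N.-1 x y -> f x <= f y.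

Definition incr_set (R : realType) (N : nat) (A : set (N.-1.-tuple R)) : Prop :=
  A `<=` Omega R N /\ incr_fun R N (\1_A : N.-1.-tuple R -> R).

(* Main.v *)
Require Import Defs.
Set Warnings "-all".
From HB Require Import structures.
From mathcomp Require Import all_boot all_order all_algebra.
From mathcomp Require Import all_classical all_reals all_analysis.
From mathcomp Require Import lra ring zify.
From mathcomp Require Import measurable_realfun.
Import Order.TTheory GRing.Theory Num.Theory.
Import numFieldNormedType.Exports.
Local Open Scope classical_set_scope.
Local Open Scope ring_scope.
Lemma two_point (R : realFieldType) (a1 a2 b1 b2 c1 c2 d1 d2 : R) :
  0 <= a1 -> 0 <= a2 -> 0 <= b1 -> 0 <= b2 -> 0 <= c1 -> 0 <= c2 -> 0 <= d1 -> 0 <= d2 ->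
  a1 * b1 <= c1 * d1 -> a2 * b2 <= c2 * d2 -> a1 * b2 <= c2 * d1 -> a2 * b1 <= c2 * d1 ->
  a1 * b2 + a2 * b1 <= c1 * d2 + c2 * d1.
Proof.
move=> ha1 ha2 hb1 hb2 hc1 hc2 hd1 hd2 h11 h22 h12 h21.
set x := c2 * d1.
have x0 : 0 <= x by apply: mulr_ge0.
have [xe|xpos] := eqVneq x 0.
  have := mulr_ge0 ha1 hb2; have := mulr_ge0 ha2 hb1; have := mulr_ge0 hc1 hd2.
  rewrite /x in xe h12 h21; lra.
have xp : 0 < x by rewrite lt_def xpos x0.
have key : x * (a1 * b2 + a2 * b1) <= x * (c1 * d2 + c2 * d1).
  have p : 0 <= (x - a1 * b2) * (x - a2 * b1) by apply: mulr_ge0; rewrite subr_ge0.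
  have q : (a1 * b2) * (a2 * b1) <= (c1 * d1) * (c2 * d2).
    rewrite mulrACA [X in X <= _](_ : _ = (a1 * b1) * (a2 * b2)); last by ring.
    by apply: ler_pM => //; apply: mulr_ge0.
  rewrite /x in p q *; nra.
by rewrite ler_pM2l in key.
Qed.

Section OneD.
Variable R : realType.
Notation mu := (@lebesgue_measure R).
Local Open Scope ereal_scope.

Lemma half_le (x y : \bar R) : 0 <= x -> 0 <= y -> x + x <= y + y -> x <= y.
Proof.
case: x => [x| |]; case: y => [y| |] //=.
- by rewrite !lee_fin => ? ? ?; lra.
- by move=> *; rewrite leey.


Qed.

Lemma meas_prodf (A B : R -> R) : measurable_fun setT A -> measurable_fun setT B ->
  measurable_fun setT (fun z : R * R => (A z.1 * B z.2)%:E).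
Proof.
move=> mA mB; apply/measurable_EFinP; apply: measurable_funM.
  exact: measurableT_comp mA measurable_fst.
exact: measurableT_comp mB measurable_snd.
Qed.

Lemma prod_int (A B : R -> R) : measurable_fun setT A -> measurable_fun setT B ->
  (forall s, (0 <= A s)%R) -> (forall s, (0 <= B s)%R) ->
  \int[mu]_s (A s)%:E * \int[mu]_t (B t)%:E = \int[mu]_s \int[mu]_t (A s * B t)%:E.
Proof.
move=> mA mB A0 B0.
rewrite -ge0_integralZr //; last 3 first.
- exact/measurable_EFinP.
- by move=> x _; rewrite lee_fin.
- by apply: integral_ge0 => x _; rewrite lee_fin.
apply: eq_integral => s _.
under [RHS]eq_integral do rewrite EFinM.
rewrite ge0_integralZl //.
- exact/measurable_EFinP.
- by move=> x _; rewrite lee_fin.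
- by rewrite lee_fin.
Qed.

Lemma sym_int (A B : R -> R) : measurable_fun setT A -> measurable_fun setT B ->
  (forall s, (0 <= A s)%R) -> (forall s, (0 <= B s)%R) ->
  \int[mu]_s \int[mu]_t ((A s * B t)%:E + (A t * B s)%:E) =
  \int[mu]_s (A s)%:E * \int[mu]_t (B t)%:E + \int[mu]_s (A s)%:E * \int[mu]_t (B t)%:E.
Proof.
move=> mA mB A0 B0.
have mP := meas_prodf A B mA mB.
have mP' : measurable_fun setT (fun z : R * R => (A z.2 * B z.1)%:E).
  apply/measurable_EFinP; apply: measurable_funM.
    exact: measurableT_comp mA measurable_snd.
  exact: measurableT_comp mB measurable_fst.
have inner s : \int[mu]_t ((A s * B t)%:E + (A t * B s)%:E) =
    \int[mu]_t (A s * B t)%:E + \int[mu]_t (A t * B s)%:E.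
  rewrite ge0_integralD //.
  - by move=> t _; rewrite lee_fin mulr_ge0.
  - exact: (measurable_fun_pair2 (f := fun z : R * R => (A z.1 * B z.2)%:E)).
  - by move=> t _; rewrite lee_fin mulr_ge0.
  - exact: (measurable_fun_pair2 (f := fun z : R * R => (A z.2 * B z.1)%:E)).
under eq_integral do rewrite inner.
rewrite ge0_integralD //; last 4 first.
- by move=> s _; apply: integral_ge0 => t _; rewrite lee_fin mulr_ge0.
- apply: (measurable_fun_fubini_tonelli_F (m2 := mu) (fun z : R * R => (A z.1 * B z.2)%:E)) => // z.
  by rewrite lee_fin mulr_ge0.
- by move=> s _; apply: integral_ge0 => t _; rewrite lee_fin mulr_ge0.
- apply: (measurable_fun_fubini_tonelli_F (m2 := mu) (fun z : R * R => (A z.2 * B z.1)%:E)) => // z.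
  by rewrite lee_fin mulr_ge0.
rewrite prod_int //; congr (_ + _).
rewrite (fubini_tonelli (m1 := mu) (m2 := mu) (fun z : R * R => (A z.2 * B z.1)%:E)) //=.
by move=> z; rewrite lee_fin mulr_ge0.
Qed.

Lemma meas_sym (A B : R -> R) : measurable_fun setT A -> measurable_fun setT B ->
  (forall s, (0 <= A s)%R) -> (forall s, (0 <= B s)%R) ->
  measurable_fun setT (fun s => \int[mu]_t ((A s * B t)%:E + (A t * B s)%:E)) /\
  forall s, measurable_fun setT (fun t => ((A s * B t)%:E + (A t * B s)%:E)).
Proof.
move=> mA mB A0 B0.
have mP : measurable_fun setT (fun z : R * R => (A z.1 * B z.2)%:E + (A z.2 * B z.1)%:E).
  apply: emeasurable_funD; first exact: meas_prodf.
  apply/measurable_EFinP; apply: measurable_funM.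
    exact: measurableT_comp mA measurable_snd.
  exact: measurableT_comp mB measurable_fst.
split.
  apply: (measurable_fun_fubini_tonelli_F (m2 := mu) (fun z : R * R => (A z.1 * B z.2)%:E + (A z.2 * B z.1)%:E)) => // z.
  by rewrite -EFinD lee_fin addr_ge0 // mulr_ge0.
move=> s; exact: (measurable_fun_pair2 (f := fun z : R * R => (A z.1 * B z.2)%:E + (A z.2 * B z.1)%:E)).
Qed.

Lemma ff1 (A B C D : R -> R) :
  measurable_fun setT A -> measurable_fun setT B ->
  measurable_fun setT C -> measurable_fun setT D ->
  (forall s, (0 <= A s)%R) -> (forall s, (0 <= B s)%R) ->
  (forall s, (0 <= C s)%R) -> (forall s, (0 <= D s)%R) ->
  (forall s t, (A s * B t <= C (Num.max s t) * D (Num.min s t))%R) ->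
  \int[mu]_s (A s)%:E * \int[mu]_t (B t)%:E <= \int[mu]_s (C s)%:E * \int[mu]_t (D t)%:E.
Proof.
move=> mA mB mC mD A0 B0 C0 D0 H.
have ge0I (F : R -> R) : (forall s, (0 <= F s)%R) -> 0 <= \int[mu]_s (F s)%:E.
  by move=> F0; apply: integral_ge0 => x _; rewrite lee_fin.
apply: half_le; try by apply: mule_ge0; apply: ge0I.
rewrite -!sym_int //.
have [mAB mAB'] := meas_sym A B mA mB A0 B0.
have [mCD mCD'] := meas_sym C D mC mD C0 D0.
apply: ge0_le_integral => //.
- by move=> s _; apply: integral_ge0 => t _; rewrite -EFinD lee_fin addr_ge0 // mulr_ge0.
move=> s _; apply: ge0_le_integral => //; try exact: mAB' s; try exact: mCD' s.
- by move=> t _; rewrite -EFinD lee_fin addr_ge0 // mulr_ge0.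
move=> t _; rewrite -!EFinD lee_fin.
wlog st : s t / (s <= t)%R.
  move=> W; have [/W//|/ltW ts] := leP s t.
  by have := W t s ts; lra.
have := H s t; have := H t s; have := H s s; have := H t t.
rewrite (max_r st) (min_l st) (max_l st) (min_r st) !maxxx !minxx => htt hss hts hst.
by apply: two_point.
Qed.
End OneD.

Section Int1.
Variable R : realType.
Notation mu := (@lebesgue_measure R).

Lemma int1 (h : R -> R) (M K : R) : 0 < K -> measurable_fun setT h ->
  (forall s, `|h s| <= M) -> (forall s, K < `|s| -> h s = 0) ->
  mu.-integrable setT (EFin \o h) /\ `|\int[mu]_(s in setT) h s| <= M * (K + K).
Proof.
move=> K0 mh hM hK.
have M0 : 0 <= M by apply: le_trans (hM 0).
set I := `[-K, K]%classic : set R.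
have mI : measurable I by exact: measurable_itv.
have le1 s : (`|(h s)%:E| <= (M * \1_I s)%:E)%E.
  rewrite lee_fin /=.
  have [sK|Ks] := leP `|s| K.
    have -> : \1_I s = 1 :> R.
      by rewrite indicE mem_set // /I /= in_itv /= -ler_norml.
    by rewrite mulr1.
  by rewrite hK // normr0 mulr_ge0.
have intg : (\int[mu]_(s in setT) (M * \1_I s)%:E = (M * (K + K))%:E)%E.
  under eq_integral do rewrite EFinM.
  rewrite ge0_integralZl_EFin //; try by [move=> s _; rewrite lee_fin | apply/measurable_EFinP; exact: measurable_indic].
  rewrite integral_indic // setIT /I [X in (_ * X)%E]lebesgue_measure_itv /= lte_fin.
  have -> : (- K < K) = true by apply/idP; lra.
  by rewrite -EFinD -EFinM opprK.
have mh' : measurable_fun setT (EFin \o h) by exact/measurable_EFinP.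
have bnd : (\int[mu]_(s in setT) `|(EFin \o h) s| <= (M * (K + K))%:E)%E.
  rewrite -intg; apply: ge0_le_integral => //.
  - by apply: measurableT_comp.
  - by apply/measurable_EFinP; apply: measurable_funM => //; exact: measurable_indic.
  by move=> s _; exact: le1.
have ih : mu.-integrable setT (EFin \o h).
  by apply/integrableP; split => //; apply: le_lt_trans bnd _; rewrite ltry.
split => //.
rewrite -lee_fin EFin_normr_Rintegral //.
apply: le_trans bnd; exact: le_abse_integral.
Qed.
End Int1.

Section RiterTheory.
Variable R : realType.
Notation mu := (@lebesgue_measure R).

Lemma meas_Rint d (T : measurableType d) (H : T * R -> R) :
  measurable_fun setT H -> measurable_fun setT (fun p => \int[mu]_(y in setT) H (p, y)).
Proof.
move=> mH.
rewrite /Rintegral.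
apply: (measurableT_comp (fine_measurable measurableT)) => /=.
have mEH : measurable_fun setT (EFin \o H) by exact/measurable_EFinP.
have E : (fun p => \int[mu]_(y in setT) (H (p, y))%:E)%E =
   (fun p => (\int[mu]_(y in setT) (EFin \o H)^\+ (p, y)) - (\int[mu]_(y in setT) (EFin \o H)^\- (p, y)))%E.
  apply/funext => p; rewrite integralE; congr (_ + _)%E; [|congr (- _)%E]; by apply: eq_integral => y _; rewrite ?funeposE ?funenegE.
rewrite E; apply: emeasurable_funB.
- apply: (measurable_fun_fubini_tonelli_F (m2:=mu) ((EFin \o H)^\+)%E) => //.
  exact: measurable_funepos.
- apply: (measurable_fun_fubini_tonelli_F (m2:=mu) ((EFin \o H)^\-)%E) => //.
  exact: measurable_funeneg.
Qed.

Lemma meas_Riter n : forall d (T : measurableType d) (G : T * n.-tuple R -> R),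
  measurable_fun setT G -> measurable_fun setT (fun p => Riter R n (fun x => G (p, x))).
Proof.
elim: n => [|n IH] d T G mG /=.
  apply: measurableT_comp mG _; apply: measurable_fun_pair => //.
pose H (q : T * R) := Riter R n (fun x => G (q.1, cons_tuple q.2 x)).
have mH : measurable_fun setT H.
  apply: (IH _ _ (fun z : (T * R) * n.-tuple R => G (z.1.1, cons_tuple z.1.2 z.2))).
  apply: measurableT_comp mG _; apply: measurable_fun_pair.
    exact: measurableT_comp measurable_fst measurable_fst.
  exact: measurable_cons (measurableT_comp measurable_snd measurable_fst) measurable_snd.
exact: (meas_Rint _ _ H mH).
Qed.

End RiterTheory.

Section Nice.
Variable R : realType.
Notation mu := (@lebesgue_measure R).

Definition box {n} (K : R) (x : n.-tuple R) := forall i, `|tnth x i| <= K.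

Definition NiceB n (M K : R) (g : n.-tuple R -> R) :=
  [/\ 0 < K, measurable_fun setT g, forall x, `|g x| <= M & forall x, ~ box K x -> g x = 0].

Lemma eq_Riter n (g1 g2 : n.-tuple R -> R) : (forall x, g1 x = g2 x) -> Riter R n g1 = Riter R n g2.
Proof. by move=> e; congr Riter; apply/funext. Qed.

Lemma Riter0 n : Riter R n (fun _ => 0) = 0.
Proof.
elim: n => [//|n IH] /=.
under eq_Rintegral do rewrite IH.
by rewrite Rintegral_cst // mul0r.
Qed.

Lemma Riter_ge0 n (g : n.-tuple R -> R) : (forall x, 0 <= g x) -> 0 <= Riter R n g.
Proof.
elim: n g => [|n IH] g g0 /=; first exact: g0.
by apply: Rintegral_ge0 => t _; apply: IH.
Qed.

Lemma NiceB_sec {n M K g} t : NiceB n.+1 M K g -> NiceB n M K (fun x => g (cons_tuple t x)).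
Proof.
case=> K0 mg gM gK; split => //.
- apply: (measurable_fun_pair2 (f := fun z : R * n.-tuple R => g (cons_tuple z.1 z.2)) t).
  apply: measurableT_comp mg _.
  exact: measurable_cons measurable_fst measurable_snd.
- move=> x nb; apply: (gK (cons_tuple t x)) => b; apply: nb => i.
  by have := b (lift ord0 i); rewrite tnthS.
Qed.

Lemma A_meas {n} {g : n.+1.-tuple R -> R} : measurable_fun setT g ->
  measurable_fun setT (fun t => Riter R n (fun x => g (cons_tuple t x))).
Proof.
move=> mg.
apply: (meas_Riter _ _ _ _ (fun z : R * n.-tuple R => g (cons_tuple z.1 z.2))).
apply: measurableT_comp mg _.
exact: measurable_cons measurable_fst measurable_snd.
Qed.

Lemma A_supp {n M K} {g : n.+1.-tuple R -> R} t : NiceB n.+1 M K g -> K < `|t| ->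
  Riter R n (fun x => g (cons_tuple t x)) = 0.
Proof.
case=> K0 mg gM gK Kt.
rewrite -(Riter0 n); apply: eq_Riter => x; apply: gK => b.
by have := b ord0; rewrite tnth0 leNgt Kt.
Qed.

Lemma Riter_bound {n} : forall M K g, NiceB n M K g -> `|Riter R n g| <= M * (K + K) ^+ n.
Proof.
elim: n => [|n IH] M K g Ng.
  by case: Ng => _ _ gM _; rewrite /= expr0 mulr1.
have [K0 mg gM gK] := Ng.
have [_ h] := @int1 R (fun t => Riter R n (fun x => g (cons_tuple t x)))
   (M * (K + K) ^+ n) K K0 (A_meas mg) (fun t => IH _ _ _ (NiceB_sec t Ng))
   (fun t => A_supp t Ng).
by rewrite /= exprSr mulrA.
Qed.

Lemma A_int {n M K} {g : n.+1.-tuple R -> R} : NiceB n.+1 M K g ->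
  mu.-integrable setT (EFin \o (fun t => Riter R n (fun x => g (cons_tuple t x)))).
Proof.
move=> Ng; have [K0 mg gM gK] := Ng.
have [-> _] := @int1 R (fun t => Riter R n (fun x => g (cons_tuple t x)))
   (M * (K + K) ^+ n) K K0 (A_meas mg)
   (fun t => Riter_bound _ _ _ (NiceB_sec t Ng)) (fun t => A_supp t Ng).
by [].
Qed.

Lemma intZ (f : R -> R) a : mu.-integrable setT (EFin \o f) ->
  mu.-integrable setT (EFin \o (fun t => a * f t)).
Proof.
move=> If; have := integrableZl measurableT a If.
by apply: eq_integrable => // x _ /=; rewrite EFinM.
Qed.

Lemma Riter_lin n : forall M1 K1 M2 K2 g1 g2 (a b : R),
  NiceB n M1 K1 g1 -> NiceB n M2 K2 g2 ->
  Riter R n (fun x => a * g1 x + b * g2 x) = a * Riter R n g1 + b * Riter R n g2.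
Proof.
elim: n => [//|n IH] M1 K1 M2 K2 g1 g2 a b N1 N2 /=.
under eq_Rintegral => t _ do rewrite (IH _ _ _ _ _ _ a b (NiceB_sec t N1) (NiceB_sec t N2)).
rewrite RintegralD //; try first [exact: intZ (A_int N1) | exact: intZ (A_int N2)].
by rewrite !RintegralZl //; first [exact: A_int N1 | exact: A_int N2].
Qed.

End Nice.

Section FF.
Variable R : realType.
Notation mu := (@lebesgue_measure R).

Definition tmax {n} (x y : n.-tuple R) : n.-tuple R :=
  [tuple Num.max (tnth x i) (tnth y i) | i < n].

Lemma tmax_cons n s t (x y : n.-tuple R) :
  tmax (cons_tuple s x) (cons_tuple t y) = cons_tuple (Num.max s t) (tmax x y).
Proof.
apply: eq_from_tnth => i; case: (unliftP ord0 i) => [j ->|->].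
  by rewrite tnth_mktuple !tnthS tnth_mktuple.
by rewrite tnth_mktuple !tnth0.
Qed.

Lemma tmin_cons n s t (x y : n.-tuple R) :
  tmin R n.+1 (cons_tuple s x) (cons_tuple t y) = cons_tuple (Num.min s t) (tmin R n x y).
Proof.
apply: eq_from_tnth => i; case: (unliftP ord0 i) => [j ->|->].
  by rewrite tnth_mktuple !tnthS tnth_mktuple.
by rewrite tnth_mktuple !tnth0.
Qed.

Definition Nice {n} (g : n.-tuple R -> R) := exists M K, NiceB R n M K g.

Lemma Nice_sec n (g : n.+1.-tuple R -> R) t : Nice g -> Nice (fun x => g (cons_tuple t x)).
Proof. by case=> M [K N]; exists M, K; exact: NiceB_sec. Qed.

Lemma fin_Riter n (g : n.+1.-tuple R -> R) : Nice g ->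
  (\int[mu]_(s in setT) (Riter R n (fun x => g (cons_tuple s x)))%:E)%E \is a fin_num.
Proof. by case=> M [K N]; have h := integrable_fin_num measurableT (A_int R N); exact h. Qed.

Lemma meas_A n (g : n.+1.-tuple R -> R) : Nice g ->
  measurable_fun setT (fun s => Riter R n (fun x => g (cons_tuple s x))).
Proof. by case=> M [K [_ mg _ _]]; exact: A_meas. Qed.

Lemma FF n : forall (a b c e : n.-tuple R -> R),
  Nice a -> Nice b -> Nice c -> Nice e ->
  (forall x, 0 <= a x) -> (forall x, 0 <= b x) -> (forall x, 0 <= c x) -> (forall x, 0 <= e x) ->
  (forall x y, a x * b y <= c (tmax x y) * e (tmin R n x y)) ->
  Riter R n a * Riter R n b <= Riter R n c * Riter R n e.
Proof.
elim: n => [|n IH] a b c e Na Nb Nc Ne a0 b0 c0 e0 H /=.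
  by have := H [tuple] [tuple]; rewrite [tmax _ _]tuple0 [tmin _ _ _ _]tuple0.
rewrite /Rintegral -lee_fin !EFinM !fineK; try exact: fin_Riter.
apply: ff1; try exact: meas_A.
- by move=> s; apply: Riter_ge0.
- by move=> s; apply: Riter_ge0.
- by move=> s; apply: Riter_ge0.
- by move=> s; apply: Riter_ge0.
move=> s t; apply: IH; try exact: Nice_sec.
- by move=> x; apply: a0.
- by move=> x; apply: b0.
- by move=> x; apply: c0.
- by move=> x; apply: e0.
by move=> x y; rewrite -tmax_cons -tmin_cons; exact: H.
Qed.

End FF.

Section Lattice.
Variable R : realType.
Variable N : nat.
Hypothesis N2 : (2 <= N)%N.

Lemma xc_map (F : R -> R -> R) (x y : N.-1.-tuple R) k : F 0 0 = 0 -> F N%:R N%:R = N%:R ->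
  xc R N [tuple F (tnth x i) (tnth y i) | i < N.-1] k = F (xc R N x k) (xc R N y k).
Proof.
move=> F0 FN; rewrite /xc; case: eqP => _ //; case: eqP => _ //.
have [lt|ge] := ltnP k.-1 N.-1.
  have e (z : N.-1.-tuple R) : nth 0 z k.-1 = tnth z (Ordinal lt) by rewrite (tnth_nth 0).
  by rewrite !e tnth_mktuple.
by rewrite !nth_default ?size_tuple.
Qed.

Lemma xc_tmax (x y : N.-1.-tuple R) k : xc R N (tmax R x y) k = Num.max (xc R N x k) (xc R N y k).
Proof. by apply: xc_map; rewrite maxxx. Qed.

Lemma xc_tmin (x y : N.-1.-tuple R) k : xc R N (tmin R N.-1 x y) k = Num.min (xc R N x k) (xc R N y k).
Proof. by apply: xc_map; rewrite minxx. Qed.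

Lemma Omega_tmax (x y : N.-1.-tuple R) : Omega R N x -> Omega R N y -> Omega R N (tmax R x y).
Proof.
move=> hx hy k kN; rewrite !xc_tmax ge_max !le_max.
by rewrite (hx k kN) (hy k kN) orbT.
Qed.

Lemma Omega_tmin (x y : N.-1.-tuple R) : Omega R N x -> Omega R N y -> Omega R N (tmin R N.-1 x y).
Proof.
move=> hx hy k kN; rewrite !xc_tmin le_min !ge_min.
by rewrite (hx k kN) (hy k kN) orbT.
Qed.

Lemma tle_tmax (x y : N.-1.-tuple R) : tle R N.-1 y (tmax R x y).
Proof. by move=> i; rewrite tnth_mktuple le_max lexx orbT. Qed.

Lemma Omega_chain (x : N.-1.-tuple R) j k : Omega R N x -> (j <= k)%N -> (k <= N)%N -> xc R N x j <= xc R N x k.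
Proof.
move=> hx jk kN; elim: k jk kN => [|k IH] jk kN.
  by move: jk; rewrite leqn0 => /eqP ->.
rewrite leq_eqVlt in jk; case/orP: jk => [/eqP ->//|jk].
apply: le_trans (IH jk (ltnW kN)) _; exact: hx.
Qed.

Lemma ltN1 m : (m < N.-1)%N -> (m.+1 < N)%N.
Proof. by case: (N) N2 => // n _; rewrite /= ltnS. Qed.

Lemma xc_tnth (x : N.-1.-tuple R) (i : 'I_N.-1) : xc R N x i.+1 = tnth x i.
Proof.
rewrite /xc /= (ltn_eqF (ltN1 _ (ltn_ord i))).
by rewrite (tnth_nth 0).
Qed.

Lemma Omega_bnd (x : N.-1.-tuple R) i : Omega R N x -> 0 <= tnth x i <= N%:R.
Proof.
move=> hx; have iN := ltn_ord i.
have iN' : (i.+1 <= N)%N by apply: ltnW; exact: ltN1 _ iN.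
rewrite -xc_tnth; apply/andP; split.
  by have := Omega_chain x _ _ hx (isT : (0 <= i.+1)%N) iN'; rewrite /xc.
have := Omega_chain x _ _ hx iN' (leqnn N).
by rewrite [X in _ <= X -> _]/xc eqxx gtn_eqF // ltnW.
Qed.

Lemma gap_ineq (a b c d : R) : a <= b -> c <= d ->
  (b - a) * (d - c) <= (Num.max b d - Num.max a c) * (Num.min b d - Num.min a c).
Proof.
move=> ab cd.
have tot (u v : R) : u <= v \/ v <= u.
  by case: (boolP (u <= v)) => h; [left|right; rewrite ltW // ltNge].
have [ac|ca] := tot a c; have [bd|db] := tot b d.
- by rewrite (max_r ac) (max_r bd) (min_l ac) (min_l bd) mulrC.
- rewrite (max_r ac) (max_l db) (min_l ac) (min_r db).
  have : 0 <= (c - a) * (b - d) by apply: mulr_ge0; rewrite subr_ge0.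
  nra.
- rewrite (max_l ca) (max_r bd) (min_r ca) (min_l bd).
  have : 0 <= (a - c) * (d - b) by apply: mulr_ge0; rewrite subr_ge0.
  nra.
- by rewrite (max_l ca) (max_l db) (min_r ca) (min_r db).
Qed.

Lemma dens_mtp2 (alpha : R) (x y : N.-1.-tuple R) : 1 <= alpha -> Omega R N x -> Omega R N y ->
  dens R N alpha x * dens R N alpha y <=
  dens R N alpha (tmax R x y) * dens R N alpha (tmin R N.-1 x y).
Proof.
move=> a1 hx hy; rewrite /dens -!big_split /=.
rewrite [X in X <= _]big_nat_cond [X in _ <= X]big_nat_cond.
apply: ler_prod => i; rewrite andbT => /andP[i1 iN]; rewrite mulr_ge0 ?powR_ge0 //=.
have i1' : i.-1.+1 = i by case: (i) i1.
have hi : (i.-1 < N)%N by rewrite -ltnS i1'.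
have := hx _ hi; have := hy _ hi; rewrite i1' => cd ab.
rewrite !xc_tmax !xc_tmin.
set a := xc R N x i.-1; set b := xc R N x i; set c := xc R N y i.-1; set d := xc R N y i.
rewrite -powRM ?subr_ge0 // -powRM; first last.
- by rewrite subr_ge0 le_min !ge_min ab cd orbT.
- by rewrite subr_ge0 ge_max !le_max ab cd orbT.
apply: ge0_ler_powR; first by rewrite subr_ge0.
- by rewrite nnegrE mulr_ge0 // subr_ge0.
- rewrite nnegrE mulr_ge0 // subr_ge0; first by rewrite ge_max !le_max ab cd orbT.
  by rewrite le_min !ge_min ab cd orbT.
exact: gap_ineq.
Qed.

End Lattice.

Section Concrete.
Variable R : realType.
Variable N : nat.
Hypothesis N2 : (2 <= N)%N.
Variable alpha : R.
Hypothesis a1 : 1 <= alpha.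
Local Notation Om := (Omega R N).

Lemma ind1 {T} (S : set T) x : S x -> \1_S x = 1 :> R.
Proof. by move=> Sx; rewrite indicE mem_set. Qed.

Lemma ind0 {T} (S : set T) x : ~ S x -> \1_S x = 0 :> R.
Proof. by move=> Sx; rewrite indicE memNset. Qed.

Lemma meas_xc k : measurable_fun setT (fun x : N.-1.-tuple R => xc R N x k).
Proof.
rewrite /xc; case: eqP => _; first exact: measurable_cst.
case: eqP => _; first exact: measurable_cst.
have [lt|ge] := ltnP k.-1 N.-1.
  have -> : (fun x : N.-1.-tuple R => nth 0 x k.-1) = (fun x => tnth x (Ordinal lt)).
    by apply/funext => x; rewrite (tnth_nth 0).
  exact: measurable_tnth.
have -> : (fun x : N.-1.-tuple R => nth 0 x k.-1) = (fun _ => 0).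
  by apply/funext => x; rewrite nth_default ?size_tuple.
exact: measurable_cst.
Qed.

Lemma meas_le (u v : N.-1.-tuple R -> R) : measurable_fun setT u -> measurable_fun setT v ->
  measurable [set x | u x <= v x].
Proof.
move=> mu mv.
have := measurable_funB mv mu measurableT (measurable_itv `[0, +oo[).
rewrite setTI; congr measurable; apply/seteqP; split => x /=.
  by rewrite in_itv /= andbT subr_ge0.
by rewrite in_itv /= andbT subr_ge0.
Qed.

Lemma meas_Omega : measurable Om.
Proof.
have -> : Om = \bigcap_k (if (k < N)%N then [set x | xc R N x k <= xc R N x k.+1] else setT).
  apply/seteqP; split => x /=.
    by move=> hx k _; case: ifP => // kN; exact: hx.
  by move=> hx k kN; have := hx k I; rewrite kN.
apply: bigcapT_measurable => k; case: ifP => _ //.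
exact: meas_le (meas_xc k) (meas_xc k.+1).
Qed.

Lemma meas_prodseq (r : seq nat) (F : nat -> N.-1.-tuple R -> R) :
  (forall i, measurable_fun setT (F i)) -> measurable_fun setT (fun x => \prod_(i <- r) F i x).
Proof.
move=> mF; elim: r => [|a r IH].
  have -> : (fun x => \prod_(i <- [::]) F i x) = (fun _ => 1) by apply/funext => x; rewrite big_nil.
  exact: measurable_cst.
have -> : (fun x => \prod_(i <- a :: r) F i x) = (fun x => F a x * \prod_(i <- r) F i x).
  by apply/funext => x; rewrite big_cons.
exact: measurable_funM.
Qed.

Lemma meas_dens : measurable_fun setT (dens R N alpha).
Proof.
apply: meas_prodseq => i.
apply: measurableT_comp (measurable_powR _) _.
exact: measurable_funB (meas_xc _) (meas_xc _).
Qed.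

Lemma xc0 (x : N.-1.-tuple R) : xc R N x 0 = 0.
Proof. by rewrite /xc. Qed.

Lemma xcN (x : N.-1.-tuple R) : xc R N x N = N%:R.
Proof. by rewrite /xc eqxx gtn_eqF // ltnW. Qed.

Lemma dens_bnd x : Om x -> 0 <= dens R N alpha x <= (N%:R `^ (alpha - 1)) ^+ N.
Proof.
move=> hx; apply/andP; split; first by apply: prodr_ge0 => i _; exact: powR_ge0.
rewrite /dens big_nat_cond.
have -> : (N%:R `^ (alpha - 1)) ^+ N = \prod_(1 <= i < N.+1 | (1 <= i < N.+1)%N && true) N%:R `^ (alpha - 1).
  by rewrite -big_nat_cond prodr_const_nat subn1.
apply: ler_prod => i; rewrite andbT => /andP[i1 iN]; rewrite powR_ge0 /=.
have i1' : i.-1.+1 = i by case: (i) i1.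
have hi : (i.-1 < N)%N by rewrite -ltnS i1'.
have := hx _ hi; rewrite i1' => h.
apply: ge0_ler_powR; first by rewrite subr_ge0.
- by rewrite nnegrE subr_ge0.
- by rewrite nnegrE.
have := Omega_chain R N x i N hx iN (leqnn _); rewrite xcN.
have := Omega_chain R N x 0 i.-1 hx (leq0n _) (ltnW hi); rewrite xc0.
lra.
Qed.

Definition NiceN (g : N.-1.-tuple R -> R) := exists M K, NiceB R N.-1 M K g.

Lemma Nice_w (g : N.-1.-tuple R -> R) G : 0 <= G -> measurable_fun Om g ->
  (forall x, Om x -> `|g x| <= G) ->
  NiceN (fun x => \1_Om x * dens R N alpha x * g x).
Proof.
move=> G0 mg gG.
exists ((N%:R `^ (alpha - 1)) ^+ N * G), (N%:R + 1); split.
- by rewrite ltr_wpDl.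
- have -> : (fun x => \1_Om x * dens R N alpha x * g x) =
            (fun x => \1_Om x * dens R N alpha x * (g \_ Om) x).
    apply/funext => x; rewrite patchE; case: ifP => // /negbT.
    by rewrite notin_setE => nx; rewrite ind0 // !mul0r.
  apply: measurable_funM; last exact: (measurable_restrictT _ meas_Omega).1.
  apply: measurable_funM; last exact: meas_dens.
  exact: measurable_indic meas_Omega.
- move=> x; case: (pselect (Om x)) => hx.
    rewrite ind1 // mul1r normrM.
    have /andP[d0 dM] := dens_bnd x hx.
    by rewrite ger0_norm //; apply: ler_pM => //; exact: gG.
  by rewrite ind0 // !mul0r normr0 mulr_ge0 // exprn_ge0 // powR_ge0.
- move=> x nb; rewrite ind0 ?mul0r // => hx; apply: nb => i.
  have /andP[t0 tN] := @Omega_bnd R N N2 x i hx.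
  by rewrite ger0_norm // ler_wpDr.
Qed.

Lemma Nice_lin (u v : N.-1.-tuple R -> R) a b : NiceN u -> NiceN v ->
  NiceN (fun x => a * u x + b * v x).
Proof.
move=> [Mu [Ku [Ku0 mu uM uK]]] [Mv [Kv [Kv0 mv vM vK]]].
exists (`|a| * Mu + `|b| * Mv), (Num.max Ku Kv); split.
- by rewrite lt_max Ku0.
- apply: measurable_funD; apply: measurable_funM => //; exact: measurable_cst.
- move=> x; apply: le_trans (ler_normD _ _) _; rewrite !normrM.
  by apply: lerD; apply: ler_wpM2l.
- move=> x nb.
  rewrite uK ?vK ?mulr0 ?addr0 // => bx; apply: nb => i; apply: le_trans (bx i) _;
  by rewrite le_max lexx ?orbT.
Qed.

End Concrete.

Section Final.
Variable R : realType.
Variable N : nat.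
Hypothesis N2 : (2 <= N)%N.

Definition zc (c : R) : N.-1.-tuple R := [tuple c | i < N.-1].

Lemma nth_zc c j : nth 0 (zc c) j = if (j < N.-1)%N then c else 0.
Proof.
case: ltnP => h.
  by have := tnth_nth 0 (zc c) (Ordinal h); rewrite tnth_mktuple /= => <-.
by rewrite nth_default ?size_tuple.
Qed.

Lemma Omega_zc c : 0 <= c <= N%:R -> Omega R N (zc c).
Proof.
move=> /andP[c0 cN] k kN; rewrite /xc !nth_zc (ltn_eqF kN) /=.
have N0 : (0:R) <= N%:R by exact: ler0n.
by repeat case: ifP => ? //=; try lra; try lia.
Qed.

End Final.

Lemma I1 {R : realType} {T} {S : set T} {x : T} : S x -> \1_S x = 1 :> R.
Proof. by move=> Sx; rewrite indicE mem_set. Qed.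

Lemma I0 {R : realType} {T} {S : set T} {x : T} : ~ S x -> \1_S x = 0 :> R.
Proof. by move=> Sx; rewrite indicE memNset. Qed.

Theorem lemma2p4 (R : realType) (N : nat) (alpha : R)
    (A B : set (N.-1.-tuple R)) :
  1 <= alpha -> (2 <= N)%N ->
  measurable A -> measurable B ->
  incr_set R N A -> incr_set R N B ->
  0 < piNset R N alpha A -> 0 < piNset R N alpha B ->
  (forall x x', A x -> B x' -> B (tmin R N.-1 x x')) ->
  forall f : N.-1.-tuple R -> R,
    measurable_fun (Omega R N) f -> incr_fun R N f ->
    condE R N alpha f A >= condE R N alpha f B.
Proof.
move=> a1 N2 mA mB [AO incA] [BO incB] pA pB hAB f mf incf.
pose Om := Omega R N.
pose z0 := zc R N 0; pose zN := zc R N N%:R.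
have Oz0 : Om z0 by apply: Omega_zc => //; rewrite lexx ler0n.
have OzN : Om zN by apply: Omega_zc => //; rewrite lexx ler0n.
have fb x : Om x -> f z0 <= f x <= f zN.
  move=> Ox; apply/andP; split; apply: incf => // i; rewrite tnth_mktuple;
  by have /andP[] := @Omega_bnd R N N2 x i Ox.
pose G := `|f z0| + `|f zN|.
have G0 : 0 <= G by rewrite addr_ge0.
have fG x : Om x -> `|f x| <= G.
  move=> Ox; have /andP[h1 h2] := fb x Ox.
  have := ler_norm (f zN); have := ler_norm (- f z0); rewrite normrN.
  rewrite ler_norml /G; move=> *; have := normr_ge0 (f z0); have := normr_ge0 (f zN); move=> *; apply/andP; split; lra.
have ind_le (S : set (N.-1.-tuple R)) x : `|\1_S x| <= 1 :> R.
  by rewrite indicE; case: (x \in S); rewrite ?normr1 ?normr0.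
pose uA := fun x => \1_Om x * dens R N alpha x * (f x * \1_A x).
pose vA := fun x => \1_Om x * dens R N alpha x * \1_A x.
pose uB := fun x => \1_Om x * dens R N alpha x * (f x * \1_B x).
pose vB := fun x => \1_Om x * dens R N alpha x * \1_B x.
have mfS (S : set (N.-1.-tuple R)) : measurable S -> measurable_fun Om (fun x => f x * \1_S x).
  by move=> mS; apply: measurable_funM => //; exact: measurable_indic.
have gSb (S : set (N.-1.-tuple R)) x : Om x -> `|f x * \1_S x| <= G.
  move=> Ox; rewrite normrM -[G]mulr1; apply: ler_pM => //; first exact: fG.
have NuA : NiceN R N uA.
  exact: (Nice_w _ _ N2 _ a1 (fun x => f x * \1_A x) G G0 (mfS A mA) (gSb A)).
have NuB : NiceN R N uB.
  exact: (Nice_w _ _ N2 _ a1 (fun x => f x * \1_B x) G G0 (mfS B mB) (gSb B)).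
have NvA : NiceN R N vA.
  exact: (Nice_w _ _ N2 _ a1 \1_A 1 ler01 (measurable_indic mA) (fun x _ => ind_le A x)).
have NvB : NiceN R N vB.
  exact: (Nice_w _ _ N2 _ a1 \1_B 1 ler01 (measurable_indic mB) (fun x _ => ind_le B x)).
pose bB := fun x => 1 * uB x + (- f z0) * vB x.
pose cA := fun x => 1 * uA x + (- f z0) * vA x.
have NbB : NiceN R N bB by exact: Nice_lin.
have NcA : NiceN R N cA by exact: Nice_lin.
have dens0 x : 0 <= dens R N alpha x by apply: prodr_ge0 => i _; exact: powR_ge0.
have ind0' (S : set (N.-1.-tuple R)) x : 0 <= \1_S x :> R by rewrite indicE ler0n.
have vge0 (S : set (N.-1.-tuple R)) x : 0 <= \1_Om x * dens R N alpha x * \1_S x.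
  by rewrite !mulr_ge0.
have uge0 (S : set (N.-1.-tuple R)) x :
    0 <= 1 * (\1_Om x * dens R N alpha x * (f x * \1_S x)) + (- f z0) * (\1_Om x * dens R N alpha x * \1_S x).
  have -> : 1 * (\1_Om x * dens R N alpha x * (f x * \1_S x)) + (- f z0) * (\1_Om x * dens R N alpha x * \1_S x)
     = \1_Om x * dens R N alpha x * \1_S x * (f x - f z0) by ring.
  case: (pselect (Om x)) => Ox; last by rewrite I0 // !mul0r.
  apply: mulr_ge0 => //; rewrite subr_ge0.
  by have /andP[] := fb x Ox.
have key := @FF R N.-1 vA bB cA vB NvA NbB NcA NvB (vge0 A) (uge0 B) (uge0 A) (vge0 B).
have Hc : forall x y, vA x * bB y <= cA (tmax R x y) * vB (tmin R N.-1 x y).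
  move=> x y.
  have c0' z : 0 <= cA z := uge0 A z.
  have e0' z : 0 <= vB z := vge0 B z.
  case: (pselect (A x)) => Ax; last first.
    by rewrite /vA (I0 Ax) mulr0 mul0r; apply: mulr_ge0.
  case: (pselect (B y)) => By; last first.
    by rewrite /bB /uB /vB (I0 By) !(mulr0, mul0r, addr0); apply: mulr_ge0.
  have Ox := AO _ Ax; have Oy := BO _ By.
  have OX : Om (tmax R x y) := Omega_tmax _ _ _ _ Ox Oy.
  have OY : Om (tmin R N.-1 x y) := Omega_tmin _ _ _ _ Ox Oy.
  have lxX : tle R N.-1 x (tmax R x y) by move=> i; rewrite tnth_mktuple le_max lexx.
  have AX : A (tmax R x y).
    have := incA x _ Ox OX lxX; rewrite (I1 Ax) => h.
    apply: contrapT => nAX; move: h; rewrite (I0 nAX); lra.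
  have BY := hAB x y Ax By.
  rewrite /bB /cA /uA /uB /vA /vB (I1 Ax) (I1 By) (I1 Ox) (I1 Oy) (I1 OX) (I1 OY) (I1 AX) (I1 BY).
  rewrite !(mul1r, mulr1).
  have m := dens_mtp2 _ _ _ _ _ a1 Ox Oy.
  have /andP[fy _] := fb y Oy.
  have fyX : f y <= f (tmax R x y) by apply: incf => //; exact: tle_tmax R N x y.
  have h1 := ler_wpM2r (x := f y - f z0) (eqbRL (subr_ge0 _ _) fy) m.
  have h2 : dens R N alpha (tmax R x y) * dens R N alpha (tmin R N.-1 x y) * (f y - f z0) <=
            dens R N alpha (tmax R x y) * dens R N alpha (tmin R N.-1 x y) * (f (tmax R x y) - f z0).
    by apply: ler_wpM2l; [apply: mulr_ge0|apply: lerB].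
  nra.
have K := key Hc.
move: NuA NuB NvA NvB => [M1 [K1 NB1]] [M2 [K2 NB2]] [M3 [K3 NB3]] [M4 [K4 NB4]].
rewrite /bB /cA in K.
rewrite (Riter_lin _ _ _ _ _ _ _ _ 1 (- f z0) NB2 NB4) (Riter_lin _ _ _ _ _ _ _ _ 1 (- f z0) NB1 NB3) in K.
have K' : Riter R N.-1 vA * Riter R N.-1 uB <= Riter R N.-1 uA * Riter R N.-1 vB by nra.
move: pA pB; rewrite /condE /piNset /piN -/Om -/uA -/uB -/vA -/vB => pA pB.
set Z := Zconst R N alpha in pA pB *.
set UA := Riter R N.-1 uA in K' *; set UB := Riter R N.-1 uB in K' *.
set VA := Riter R N.-1 vA in K' pA *; set VB := Riter R N.-1 vB in K' pB *.
rewrite ler_pdivrMr //.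
have -> : Z * UA / (Z * VA) * (Z * VB) = Z * UA * (Z * VB) / (Z * VA) by rewrite mulrAC.
rewrite ler_pdivlMr //.
have e1 : Z * UB * (Z * VA) = Z ^+ 2 * (VA * UB) by ring.
have e2 : Z * UA * (Z * VB) = Z ^+ 2 * (UA * VB) by ring.
by rewrite e1 e2; apply: ler_wpM2l => //; exact: sqr_ge0.
Qed.
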